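(* Let $X_\lambda$ be a cellular multipointed $d$-space and let $\gamma_1,\gamma_2$ be execution paths of $X_\lambda$ such that there exist two nondecreasing set maps $\phi_1,\phi_2:[0,1]\to[0,1]$ (not assumed continuous) with $\phi_i(0)=0$, $\phi_i(1)=1$, and $\gamma_1(\phi_1(t))=\gamma_2(t)$, $\gamma_1(t)=\gamma_2(\phi_2(t))$ for all $t\in[0,1]$. Then $\phi_1,\phi_2\in\mathcal{G}(1,1)$ and $\phi_2=\phi_1^{-1}$.
   Context: Work in $\mathbf{Top}$, the category of $\Delta$-generated spaces (or $\Delta$-Hausdorff $\Delta$-generated spaces). $\mathcal{G}(1,1)$: the nondecreasing homeomorphisms of $[0,1]$; $*_N$: normalized composition of paths on $[0,1]$ (first path on $[0,1/2]$, second on $[1/2,1]$, double speed). A multipointed $d$-space $X=(|X|,X^0,\mathbb{P}^{\mathcal{G}}X)$: a space, a subset of states, a set of continuous execution paths $[0,1]\to|X|$ with endpoints in $X^0$, stable under precomposition by $\mathcal{G}(1,1)$ and $*_N$. Colimits: underlying spaces and states by colimits, execution paths generated by images under $*_N$ and reparametrization. ${\rm Glob}^{\mathcal{G}}(Z)$: quotient of $\{0,1\}\sqcup Z\times[0,1]$ with $(z,0)\sim0$, $(z,1)\sim1$, states $\{0,1\}$, paths $t\mapsto(z,\phi(t))$, $\phi\in\mathcal{G}(1,1)$. Cellular: $X_\lambda=\varinjlim_{\nu<\lambda}X_\nu$ for an ordinal $\lambda$ and colimit-preserving $\nu\mapsto X_\nu$ with $X_0=(X^0,X^0,\varnothing)$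 a set and each $X_\nu\to X_{\nu+1}$ a pushout of some ${\rm Glob}^{\mathcal{G}}(\mathbf{S}^{n_\nu-1})\subset{\rm Glob}^{\mathcal{G}}(\mathbf{D}^{n_\nu})$. *)

(* Defs.v *)
From Stdlib Require Import Reals Lra.
Open Scope R_scope.

Record Space := { pt :> Type; opn : (pt -> Prop) -> Prop }.

Definition is_topology (X : Space) : Prop :=
  opn X (fun _ => True) /\
  (forall U V, opn X U -> opn X V -> opn X (fun x => U x /\ V x)) /\
  (forall F : (pt X -> Prop) -> Prop, (forall U, F U -> opn X U) ->
     opn X (fun x => exists U, F U /\ U x)).

Definition continuous (X Y : Space) (f : X -> Y) : Prop :=
  forall U, opn Y U -> opn X (fun x => U (f x)).

Definition metric_opens {A : Type} (d : A -> A -> R) (U : A -> Prop) : Prop :=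
  forall x, U x -> exists eps, 0 < eps /\ forall y, d x y < eps -> U y.

Definition I01 := {t : R | 0 <= t <= 1}.
Definition Ispace : Space :=
  {| pt := I01; opn := metric_opens (fun s t : I01 => Rabs (proj1_sig s - proj1_sig t)) |}.
Definition I0 : I01 := exist _ 0 (conj (Rle_refl 0) Rle_0_1).
Definition I1 : I01 := exist _ 1 (conj Rle_0_1 (Rle_refl 1)).

Lemma clamp_prf (t : R) : 0 <= Rmin 1 (Rmax 0 t) <= 1.
Proof. unfold Rmin, Rmax; repeat destruct Rle_dec; lra. Qed.
Definition clamp (t : R) : I01 := exist _ (Rmin 1 (Rmax 0 t)) (clamp_prf t).

Definition concatN {A : Type} (g1 g2 : I01 -> A) : I01 -> A :=
  fun t => if Rle_dec (proj1_sig t) (1/2) then g1 (clamp (2 * proj1_sig t))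
           else g2 (clamp (2 * proj1_sig t - 1)).

Definition nondecr (phi : I01 -> I01) : Prop :=
  forall s t, proj1_sig s <= proj1_sig t -> proj1_sig (phi s) <= proj1_sig (phi t).

Definition in_G11 (phi : I01 -> I01) : Prop :=
  nondecr phi /\ continuous Ispace Ispace phi /\
  exists psi : I01 -> I01, continuous Ispace Ispace psi /\
    (forall t, psi (phi t) = t) /\ (forall t, phi (psi t) = t).

Record MdSpace := { msp :> Space; states : msp -> Prop; paths : (I01 -> msp) -> Prop }.

Definition is_md (X : MdSpace) : Prop :=
  is_topology X /\
  (forall g, paths X g -> continuous Ispace X g /\ states X (g I0) /\ states X (g I1)) /\
  (forall g phi, paths X g -> in_G11 phi -> paths X (fun t => g (phi t))) /\
  (forall g1 g2, paths X g1 -> paths X g2 -> g1 I1 = g2 I0 -> paths X (concatN g1 g2)).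

Definition is_mor (X Y : MdSpace) (f : X -> Y) : Prop :=
  continuous X Y f /\ (forall x, states X x -> states Y (f x)) /\
  (forall g, paths X g -> paths Y (fun t => f (g t))).

(** * Disks and spheres: D^n and S^(n-1) in R^n (Euclidean subspace topology) *)
Fixpoint sumsq (n : nat) (x : nat -> R) : R :=
  match n with O => 0 | S k => sumsq k x + x k * x k end.
Definition eucl (n : nat) (x y : nat -> R) : R := sqrt (sumsq n (fun i => x i - y i)).

Definition Disk (n : nat) := {x : nat -> R | (forall i, (n <= i)%nat -> x i = 0) /\ sumsq n x <= 1}.
Definition Sph (n : nat) := {x : nat -> R | (forall i, (n <= i)%nat -> x i = 0) /\ sumsq n x = 1}.
Definition DiskSp (n : nat) : Space :=
  {| pt := Disk n; opn := metric_opens (fun x y : Disk n => eucl n (proj1_sig x) (proj1_sig y)) |}.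
Definition SphSp (n : nat) : Space :=
  {| pt := Sph n; opn := metric_opens (fun x y : Sph n => eucl n (proj1_sig x) (proj1_sig y)) |}.
Definition sph_incl (n : nat) (x : Sph n) : Disk n :=
  exist _ (proj1_sig x) (conj (proj1 (proj2_sig x)) (Req_le _ _ (proj2 (proj2_sig x)))).

Definition prodI (Z : Space) : Space :=
  {| pt := (pt Z * I01)%type;
     opn := fun W => forall p, W p -> exists U V, opn Z U /\ opn Ispace V /\
              U (fst p) /\ V (snd p) /\ forall a b, U a -> V b -> W (a, b) |}.

(** * Glob(Z): quotient of {0,1} + Z x [0,1] identifying (z,0)~0, (z,1)~1.
    Carrier modelled by the set of equivalence classes; topology = quotient topology. *)
Definition O01 := {t : R | 0 < t < 1}.
Inductive gpt (Z : Type) := gbot | gtop | gin (z : Z) (t : O01).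
Arguments gbot {Z}. Arguments gtop {Z}. Arguments gin {Z} z t.

(** qrel p g : the class of p : Z x [0,1] is g *)
Definition qrel {Z : Type} (p : Z * I01) (g : gpt Z) : Prop :=
  match g with
  | gbot => proj1_sig (snd p) = 0
  | gtop => proj1_sig (snd p) = 1
  | gin z t => z = fst p /\ proj1_sig t = proj1_sig (snd p)
  end.

Definition GlobSp (Z : Space) : Space :=
  {| pt := gpt Z;
     opn := fun U => opn (prodI Z) (fun p => exists g, qrel p g /\ U g) |}.

Definition Glob (Z : Space) : MdSpace :=
  {| msp := GlobSp Z;
     states := fun g => g = gbot \/ g = gtop;
     paths := fun gam => exists (z : Z) (phi : I01 -> I01),
                in_G11 phi /\ forall t, qrel (z, phi t) (gam t) |}.

Definition glob_map {Z Z' : Type} (f : Z -> Z') (g : gpt Z) : gpt Z' :=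
  match g with gbot => gbot | gtop => gtop | gin z t => gin (f z) t end.

Definition is_pushout {A B C P : MdSpace} (f : A -> B) (g : A -> C)
  (i : B -> P) (j : C -> P) : Prop :=
  is_mor B P i /\ is_mor C P j /\ (forall a, i (f a) = j (g a)) /\
  forall Q : MdSpace, is_md Q -> forall (b : B -> Q) (c : C -> Q),
    is_mor B Q b -> is_mor C Q c -> (forall a, b (f a) = c (g a)) ->
    (exists u : P -> Q, is_mor P Q u /\ (forall x, u (i x) = b x) /\ (forall y, u (j y) = c y)) /\
    (forall u u' : P -> Q, is_mor P Q u -> is_mor P Q u' ->
       (forall x, u (i x) = b x) -> (forall y, u (j y) = c y) ->
       (forall x, u' (i x) = b x) -> (forall y, u' (j y) = c y) ->
       forall p, u p = u' p).

Definition leo {O : Type} (lt : O -> O -> Prop) (a b : O) : Prop := lt a b \/ a = b.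

Definition is_colim {O : Type} (lt : O -> O -> Prop) (X : O -> MdSpace)
  (m : forall a b, X a -> X b) (P : O -> Prop) (V : MdSpace) (l : forall a, X a -> V) : Prop :=
  (forall a, P a -> is_mor (X a) V (l a)) /\
  (forall a b, P a -> P b -> leo lt a b -> forall x, l b (m a b x) = l a x) /\
  forall Q : MdSpace, is_md Q -> forall q : forall a, X a -> Q,
    (forall a, P a -> is_mor (X a) Q (q a)) ->
    (forall a b, P a -> P b -> leo lt a b -> forall x, q b (m a b x) = q a x) ->
    (exists u : V -> Q, is_mor V Q u /\ forall a, P a -> forall x, u (l a x) = q a x) /\
    (forall u u' : V -> Q, is_mor V Q u -> is_mor V Q u' ->
       (forall a, P a -> forall x, u (l a x) = q a x) ->
       (forall a, P a -> forall x, u' (l a x) = q a x) -> forall v, u v = u' v).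

(** ordinals as well-ordered types *)
Definition well_order {O : Type} (lt : O -> O -> Prop) : Prop :=
  (forall a b c, lt a b -> lt b c -> lt a c) /\ (forall a, ~ lt a a) /\
  (forall a b, lt a b \/ a = b \/ lt b a) /\ well_founded lt.

Definition discrete_md (X : MdSpace) : Prop :=
  (forall x, states X x) /\ (forall U, opn X U) /\ (forall g, ~ paths X g).

(** a colimit-preserving functor nu |-> X_nu from the ordinal O, with X_0 a set
    and each X_nu -> X_(nu+1) a pushout of Glob(S^(n-1)) -> Glob(D^n) *)
Definition is_cell_tower {O : Type} (lt : O -> O -> Prop) (X : O -> MdSpace)
  (m : forall a b, X a -> X b) : Prop :=
  well_order lt /\
  (forall a, is_md (X a)) /\
  (forall a b, leo lt a b -> is_mor (X a) (X b) (m a b)) /\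
  (forall a x, m a a x = x) /\
  (forall a b c, leo lt a b -> leo lt b c -> forall x, m b c (m a b x) = m a c x) /\
  (forall a, (forall b, ~ lt b a) -> discrete_md (X a)) /\
  (forall a a', lt a a' -> (forall c, ~ (lt a c /\ lt c a')) ->
     exists (n : nat) (g : Glob (SphSp n) -> X a) (k : Glob (DiskSp n) -> X a'),
       is_mor (Glob (SphSp n)) (X a) g /\
       @is_pushout (Glob (SphSp n)) (Glob (DiskSp n)) (X a) (X a')
         (glob_map (sph_incl n)) g k (m a a')) /\
  (forall a, (exists b, lt b a) -> (forall b, lt b a -> exists c, lt b c /\ lt c a) ->
     is_colim lt X m (fun b => lt b a) (X a) (fun b => m b a)).

Definition cellular (Y : MdSpace) : Prop :=
  is_md Y /\
  exists (O : Type) (lt : O -> O -> Prop) (X : O -> MdSpace) (m : forall a b, X a -> X b)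
         (l : forall a, X a -> Y),
    is_cell_tower lt X m /\ is_colim lt X m (fun _ => True) Y l.

(* Main.v *)
Require Import Defs.
From Stdlib Require Import Reals Lra Lia Classical ProofIrrelevance FunctionalExtensionality PropExtensionality ClassicalEpsilon.
Open Scope R_scope.

Lemma I01_eq (s t : I01) : proj1_sig s = proj1_sig t -> s = t.
Proof. destruct s as [x hx], t as [y hy]; simpl; intros ->. f_equal; apply proof_irrelevance. Qed.

Lemma I01_bnd (s : I01) : 0 <= proj1_sig s <= 1.
Proof. exact (proj2_sig s). Qed.

Lemma clamp_val x : 0 <= x <= 1 -> proj1_sig (clamp x) = x.
Proof. intros H; unfold clamp; simpl; unfold Rmin, Rmax; repeat destruct Rle_dec; lra. Qed.

Definition PR (p : I01 -> R) : Prop :=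
  exists (k : nat) (t : nat -> R),
    t O = 0 /\ t k = 1 /\
    (forall i, (i < k)%nat -> t i < t (S i)) /\
    (forall i (s : I01), (i <= k)%nat -> proj1_sig s = t i -> p s = 0) /\
    (forall i (s : I01), (i < k)%nat -> t i < proj1_sig s < t (S i) -> 0 < p s < 1) /\
    (forall i (s s' : I01), (i < k)%nat -> t i < proj1_sig s < t (S i) ->
        t i < proj1_sig s' < t (S i) -> proj1_sig s < proj1_sig s' -> p s < p s') /\
    (forall i, (i < k)%nat -> exists s : I01, t i < proj1_sig s < t (S i) /\ p s < 1/2) /\
    (forall i, (i < k)%nat -> exists s : I01, t i < proj1_sig s < t (S i) /\ 1/2 <= p s).

Section Rigid.
Variables (p : I01 -> R) (k : nat) (t : nat -> R).
Hypotheses (Ht0 : t O = 0) (Htk : t k = 1)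
  (Hinc : forall i, (i < k)%nat -> t i < t (S i))
  (Hvert : forall i (s : I01), (i <= k)%nat -> proj1_sig s = t i -> p s = 0)
  (Hint : forall i (s : I01), (i < k)%nat -> t i < proj1_sig s < t (S i) -> 0 < p s < 1)
  (Hstr : forall i (s s' : I01), (i < k)%nat -> t i < proj1_sig s < t (S i) ->
        t i < proj1_sig s' < t (S i) -> proj1_sig s < proj1_sig s' -> p s < p s')
  (Hlo : forall i, (i < k)%nat -> exists s : I01, t i < proj1_sig s < t (S i) /\ p s < 1/2)
  (Hhi : forall i, (i < k)%nat -> exists s : I01, t i < proj1_sig s < t (S i) /\ 1/2 <= p s).
Variable psi : I01 -> I01.
Hypotheses (Hpsi : nondecr psi) (Hpp : forall s, p (psi s) = p s).

Definition IN j x := (j < k)%nat /\ t j < x < t (S j).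

Lemma t_le : forall i j, (i <= j <= k)%nat -> t i <= t j.
Proof.
  intros i j; induction j; intros H.
  - assert (i = O) by lia; subst; lra.
  - destruct (Nat.eq_dec i (S j)). subst; lra.
    assert (t i <= t j) by (apply IHj; lia). assert (t j < t (S j)) by (apply Hinc; lia). lra.
Qed.

Lemma t_lt : forall i j, (i < j <= k)%nat -> t i < t j.
Proof.
  intros i j H. destruct j. lia.
  assert (t i <= t j) by (apply t_le; lia). assert (t j < t (S j)) by (apply Hinc; lia). lra.
Qed.

Lemma locate_aux : forall n x, (n <= k)%nat -> 0 <= x -> x <= t n ->
  (exists j, (j <= n)%nat /\ x = t j) \/ (exists j, (j < n)%nat /\ t j < x < t (S j)).
Proof.
  induction n; intros x Hn H0 H1.
  - left; exists O; split; [lia|lra].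
  - destruct (Rle_lt_dec x (t n)) as [h|h].
    + destruct (IHn x ltac:(lia) H0 h) as [[j [? ?]]|[j [? ?]]].
      * left; exists j; split; [lia|auto].
      * right; exists j; split; [lia|auto].
    + destruct (Req_dec x (t (S n))).
      * left; exists (S n); split; [lia|auto].
      * right; exists n; split; [lia|lra].
Qed.

Lemma locate x : 0 <= x <= 1 ->
  (exists j, (j <= k)%nat /\ x = t j) \/ (exists j, IN j x).
Proof.
  intros H. destruct (locate_aux k x (le_n _) ltac:(lra) ltac:(lra)) as [h|[j [? ?]]]; auto.
  right; exists j; split; auto.
Qed.

Lemma IN_uniq i j x : IN i x -> IN j x -> i = j.
Proof.
  intros [? ?] [? ?].
  destruct (Nat.lt_trichotomy i j) as [h|[h|h]]; auto.
  - assert (t (S i) <= t j) by (apply t_le; lia). lra.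
  - assert (t (S j) <= t i) by (apply t_le; lia). lra.
Qed.

Lemma vert_not_IN j i x : (j <= k)%nat -> x = t j -> IN i x -> False.
Proof.
  intros Hj -> [? ?].
  destruct (Nat.le_gt_cases j i).
  - assert (t j <= t i) by (apply t_le; lia). lra.
  - assert (t (S i) <= t j) by (apply t_le; lia). lra.
Qed.

Lemma Fex i s : IN i (proj1_sig s) -> exists j, IN j (proj1_sig (psi s)).
Proof.
  intros [Hi Hs]. pose proof (Hint i s Hi Hs) as Hp.
  destruct (locate (proj1_sig (psi s)) (I01_bnd _)) as [[j [Hj E]]|h]; auto.
  pose proof (Hpp s) as E2. rewrite (Hvert j (psi s) Hj E) in E2. lra.
Qed.

Lemma Fmono s s' j j' : proj1_sig s <= proj1_sig s' -> IN j (proj1_sig (psi s)) ->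
  IN j' (proj1_sig (psi s')) -> (j <= j')%nat.
Proof.
  intros H [? ?] [? ?]. pose proof (Hpsi s s' H).
  destruct (Nat.le_gt_cases j j'); auto.
  assert (t (S j') <= t j) by (apply t_le; lia). lra.
Qed.

Lemma Fsame s s' j : proj1_sig s <= proj1_sig s' -> IN j (proj1_sig (psi s)) ->
  IN j (proj1_sig (psi s')) -> p s <= p s'.
Proof.
  intros H [? ?] [? ?]. pose proof (Hpsi s s' H) as HH.
  rewrite <- (Hpp s), <- (Hpp s').
  destruct (Rle_lt_or_eq_dec _ _ HH) as [h|h].
  - left; eapply Hstr; eauto.
  - right; rewrite (I01_eq _ _ h); auto.
Qed.

Lemma Pord i s s' : IN i (proj1_sig s) -> IN i (proj1_sig s') -> p s < p s' ->
  proj1_sig s < proj1_sig s'.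
Proof.
  intros [H0 H1] [H2 H3] HH.
  destruct (Rtotal_order (proj1_sig s) (proj1_sig s')) as [h|[h|h]]; auto.
  - rewrite (I01_eq _ _ h) in HH; lra.
  - pose proof (Hstr i s' s H0 H3 H1 h); lra.
Qed.

Lemma GA : forall i, (i < k)%nat -> forall s j, IN i (proj1_sig s) ->
  IN j (proj1_sig (psi s)) -> (i <= j)%nat.
Proof.
  induction i; intros Hi s j Hs Hj; [lia|].
  assert (A : forall s j, IN (S i) (proj1_sig s) -> IN j (proj1_sig (psi s)) -> p s < 1/2 -> (S i <= j)%nat).
  { clear s j Hs Hj. intros s j Hs Hj Hps.
    destruct (Hhi i ltac:(lia)) as [v [Hv Hpv]].
    assert (INv : IN i (proj1_sig v)) by (split; [lia|auto]).
    destruct (Fex i v INv) as [jv Hjv].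
    destruct Hs as [_ Hs].
    assert (proj1_sig v <= proj1_sig s) by lra.
    pose proof (Fmono v s jv j H Hjv Hj).
    pose proof (IHi ltac:(lia) v jv INv Hjv).
    destruct (Nat.eq_dec j i).
    - subst. assert (jv = i) by lia. subst. pose proof (Fsame v s i H Hjv Hj). lra.
    - lia. }
  destruct (Rlt_le_dec (p s) (1/2)) as [h|h].
  - eapply A; eauto.
  - destruct (Hlo (S i) Hi) as [u [Hu Hpu]].
    assert (INu : IN (S i) (proj1_sig u)) by (split; auto).
    destruct (Fex _ u INu) as [ju Hju].
    pose proof (A u ju INu Hju Hpu).
    assert (proj1_sig u < proj1_sig s) by (eapply Pord; eauto; lra).
    pose proof (Fmono u s ju j ltac:(lra) Hju Hj). lia.
Qed.

Lemma GB : forall d i, (i < k)%nat -> (k - i = S d)%nat -> forall s j, IN i (proj1_sig s) ->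
  IN j (proj1_sig (psi s)) -> (j <= i)%nat.
Proof.
  induction d; intros i Hi Hd s j Hs Hj.
  - destruct Hj; lia.
  - assert (A : forall s j, IN i (proj1_sig s) -> IN j (proj1_sig (psi s)) -> 1/2 <= p s -> (j <= i)%nat).
    { clear s j Hs Hj. intros s j Hs Hj Hps.
      destruct (Hlo (S i) ltac:(lia)) as [u [Hu Hpu]].
      assert (INu : IN (S i) (proj1_sig u)) by (split; [lia|auto]).
      destruct (Fex _ u INu) as [ju Hju].
      destruct Hs as [_ Hs].
      assert (proj1_sig s <= proj1_sig u) by lra.
      pose proof (IHd (S i) ltac:(lia) ltac:(lia) u ju INu Hju).
      destruct (Nat.eq_dec j (S i)).
      - subst. assert (ju = S i) by (pose proof (Fmono s u (S i) ju H Hj Hju); lia). subst.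
        pose proof (Fsame s u (S i) H Hj Hju). lra.
      - pose proof (Fmono s u j ju H Hj Hju). lia. }
    destruct (Rlt_le_dec (p s) (1/2)) as [h|h].
    + destruct (Hhi i Hi) as [v [Hv Hpv]].
      assert (INv : IN i (proj1_sig v)) by (split; auto).
      destruct (Fex _ v INv) as [jv Hjv].
      pose proof (A v jv INv Hjv Hpv).
      assert (proj1_sig s < proj1_sig v) by (eapply Pord; eauto; lra).
      pose proof (Fmono s v j jv ltac:(lra) Hj Hjv). lia.
    + eapply A; eauto.
Qed.

Lemma IN_fix i s : IN i (proj1_sig s) -> proj1_sig (psi s) = proj1_sig s.
Proof.
  intros Hs. destruct (Fex i s Hs) as [j Hj].
  assert (Hi : (i < k)%nat) by (destruct Hs; auto).
  pose proof (GA i Hi s j Hs Hj). pose proof (GB (k - i - 1) i Hi ltac:(lia) s j Hs Hj).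
  assert (j = i) by lia. subst.
  destruct Hs as [_ Hs], Hj as [_ Hj].
  destruct (Rtotal_order (proj1_sig (psi s)) (proj1_sig s)) as [h|[h|h]]; auto.
  - pose proof (Hstr i (psi s) s Hi Hj Hs h). rewrite Hpp in H1; lra.
  - pose proof (Hstr i s (psi s) Hi Hs Hj h). rewrite Hpp in H1; lra.
Qed.

Lemma rigid s : psi s = s.
Proof.
  apply I01_eq.
  destruct (locate (proj1_sig s) (I01_bnd _)) as [[j [Hj E]]|[i Hi]].
  2: eapply IN_fix; eauto.
  assert (P0 : p (psi s) = 0) by (rewrite Hpp; eapply Hvert; eauto).
  destruct (locate (proj1_sig (psi s)) (I01_bnd _)) as [[j' [Hj' E']]|[i Hi]].
  2: { destruct Hi as [Hi Hi']. pose proof (Hint i (psi s) Hi Hi'). lra. }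
  destruct (Nat.lt_trichotomy j j') as [h|[h|h]].
  - destruct (Hlo j ltac:(lia)) as [u [Hu _]].
    assert (INu : IN j (proj1_sig u)) by (split; [lia|auto]).
    pose proof (IN_fix j u INu).
    pose proof (Hpsi s u ltac:(lra)).
    assert (t (S j) <= t j') by (apply t_le; lia). lra.
  - subst; congruence.
  - destruct j. lia.
    destruct (Hhi j ltac:(lia)) as [v [Hv _]].
    assert (INv : IN j (proj1_sig v)) by (split; [lia|auto]).
    pose proof (IN_fix j v INv).
    pose proof (Hpsi v s ltac:(lra)).
    assert (t j' <= t j) by (apply t_le; lia). lra.
Qed.
End Rigid.

Lemma PR_rigid p psi : PR p -> nondecr psi -> (forall s, p (psi s) = p s) -> forall s, psi s = s.
Proof.
  intros (k & t & H0 & Hk & Hi & Hv & Hn & Hs & Hl & Hh) Hpsi Hpp s.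
  eapply rigid; eauto.
Qed.

Definition strict (f : I01 -> I01) := forall s t, proj1_sig s < proj1_sig t -> proj1_sig (f s) < proj1_sig (f t).

Lemma inv_props f g : nondecr f -> (forall t, g (f t) = t) -> (forall t, f (g t) = t) ->
  strict f /\ nondecr g /\ strict g /\ proj1_sig (f I0) = 0 /\ proj1_sig (f I1) = 1.
Proof.
  intros Hf H1 H2.
  assert (Sf : strict f).
  { intros s t h. destruct (Rle_lt_or_eq_dec _ _ (Hf s t (Rlt_le _ _ h))) as [e|e]; auto.
    apply I01_eq in e. rewrite <- (H1 s), <- (H1 t), e in h. lra. }
  assert (Ng : nondecr g).
  { intros s t h. destruct (Rle_lt_dec (proj1_sig (g s)) (proj1_sig (g t))) as [e|e]; auto.
    pose proof (Sf _ _ e). rewrite !H2 in H. lra. }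
  split; [auto|split; [auto|split]].
  - intros s t h. destruct (Rle_lt_or_eq_dec _ _ (Ng s t (Rlt_le _ _ h))) as [e|e]; auto.
    apply I01_eq in e. rewrite <- (H2 s), <- (H2 t), e in h. lra.
  - split.
    + pose proof (Hf I0 (g I0) (proj1 (I01_bnd _))). rewrite H2 in H. simpl in H.
      pose proof (I01_bnd (f I0)). lra.
    + pose proof (Hf (g I1) I1 (proj2 (I01_bnd _))). rewrite H2 in H. simpl in H.
      pose proof (I01_bnd (f I1)). lra.
Qed.

Lemma G11_props phi : in_G11 phi -> exists psi,
  (forall t, psi (phi t) = t) /\ (forall t, phi (psi t) = t) /\
  strict phi /\ nondecr psi /\ strict psi /\ proj1_sig (phi I0) = 0 /\ proj1_sig (phi I1) = 1 /\
  proj1_sig (psi I0) = 0 /\ proj1_sig (psi I1) = 1.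
Proof.
  intros [Hnd [_ [psi [_ [H1 H2]]]]]. exists psi.
  destruct (inv_props phi psi Hnd H1 H2) as (A & B & C & D & E).
  destruct (inv_props psi phi B H2 H1) as (A' & B' & C' & D' & E').
  repeat split; auto.
Qed.

Definition QRsp : Space := {| pt := R; opn := fun U => (forall x, U x) \/ (forall x, ~ U x) |}.
Definition QR : MdSpace := {| msp := QRsp; states := fun r => r = 0; paths := PR |}.

Lemma clamp_eq (c : I01) x : proj1_sig c = x -> clamp x = c.
Proof. intros <-. apply I01_eq. apply clamp_val, I01_bnd. Qed.

Lemma PR_reparam p phi : PR p -> in_G11 phi -> PR (fun t => p (phi t)).
Proof.
  intros (k & t & H0 & Hk & Hi & Hv & Hn & Hs & Hl & Hh) HG.
  destruct (G11_props phi HG) as (psi & P1 & P2 & Sphi & Npsi & Spsi & _ & _ & Q0 & Q1).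
  assert (Tb : forall i, (i <= k)%nat -> 0 <= t i <= 1).
  { intros i hi. split.
    - rewrite <- H0. apply (t_le k t Hi). lia.
    - rewrite <- Hk. apply (t_le k t Hi). lia. }
  set (c i := clamp (t i)).
  assert (Vc : forall i, (i <= k)%nat -> proj1_sig (c i) = t i) by (intros; apply clamp_val; auto).
  exists k, (fun i => proj1_sig (psi (c i))).
  split; [|split; [|split; [|split; [|split; [|split; [|split]]]]]].
  - unfold c; rewrite (clamp_eq I0 (t O)); auto.
  - unfold c; rewrite (clamp_eq I1 (t k)); auto.
  - intros i hi. apply Spsi. rewrite !Vc by lia. auto.
  - intros i s hi e. simpl. apply I01_eq in e. subst s. rewrite P2. apply Hv with i; auto.
  - intros i s hi [e1 e2]. apply (Hn i); auto.
    apply Sphi in e1. apply Sphi in e2. rewrite P2 in e1, e2. rewrite Vc in e1, e2 by lia. lra.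
  - intros i s s' hi [e1 e2] [e3 e4] e. apply (Hs i); auto.
    + apply Sphi in e1. apply Sphi in e2. rewrite P2 in e1, e2. rewrite Vc in e1, e2 by lia. lra.
    + apply Sphi in e3. apply Sphi in e4. rewrite P2 in e3, e4. rewrite Vc in e3, e4 by lia. lra.
  - intros i hi. destruct (Hl i hi) as [s [[e1 e2] e]]. exists (psi s). rewrite P2. split; auto.
    rewrite <- (Vc i) in e1 by lia. rewrite <- (Vc (S i)) in e2 by lia. split; apply Spsi; auto.
  - intros i hi. destruct (Hh i hi) as [s [[e1 e2] e]]. exists (psi s). rewrite P2. split; auto.
    rewrite <- (Vc i) in e1 by lia. rewrite <- (Vc (S i)) in e2 by lia. split; apply Spsi; auto.
Qed.

Lemma concat_l {A} (p1 p2 : I01 -> A) s : proj1_sig s <= 1/2 -> concatN p1 p2 s = p1 (clamp (2 * proj1_sig s)).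
Proof. intros h; unfold concatN; destruct Rle_dec; [reflexivity|lra]. Qed.
Lemma concat_r {A} (p1 p2 : I01 -> A) s : 1/2 < proj1_sig s -> concatN p1 p2 s = p2 (clamp (2 * proj1_sig s - 1)).
Proof. intros h; unfold concatN; destruct Rle_dec; [lra|reflexivity]. Qed.

Lemma PR_concat p1 p2 : PR p1 -> PR p2 -> PR (concatN p1 p2).
Proof.
  intros (k1 & t1 & H0 & Hk & Hi & Hv & Hn & Hs & Hl & Hh)
         (k2 & t2 & H0' & Hk' & Hi' & Hv' & Hn' & Hs' & Hl' & Hh').
  assert (Tb : forall i, (i <= k1)%nat -> 0 <= t1 i <= 1).
  { intros i hi. split.
    - rewrite <- H0. apply (t_le k1 t1 Hi). lia.
    - rewrite <- Hk. apply (t_le k1 t1 Hi). lia. }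
  assert (Tb' : forall i, (i <= k2)%nat -> 0 <= t2 i <= 1).
  { intros i hi. split.
    - rewrite <- H0'. apply (t_le k2 t2 Hi'). lia.
    - rewrite <- Hk'. apply (t_le k2 t2 Hi'). lia. }
  assert (Tp' : forall i, (1 <= i <= k2)%nat -> 0 < t2 i).
  { intros i hi. rewrite <- H0'. apply (t_lt k2 t2 Hi'). lia. }
  set (T i := if Nat.leb i k1 then t1 i / 2 else (1 + t2 (i - k1)%nat) / 2).
  assert (TL : forall i, (i <= k1)%nat -> T i = t1 i / 2).
  { intros i hi. unfold T. destruct (Nat.leb_spec i k1); [reflexivity|lia]. }
  assert (TR : forall i, (k1 <= i)%nat -> T i = (1 + t2 (i - k1)%nat) / 2).
  { intros i hi. unfold T. destruct (Nat.leb_spec i k1).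
    - assert (i = k1) by lia. subst. rewrite Nat.sub_diag, Hk, H0'. lra.
    - reflexivity. }
  assert (C1 : forall s : I01, proj1_sig s <= 1/2 -> proj1_sig (clamp (2 * proj1_sig s)) = 2 * proj1_sig s).
  { intros s h. apply clamp_val. pose proof (I01_bnd s). lra. }
  assert (C2 : forall s : I01, 1/2 < proj1_sig s -> proj1_sig (clamp (2 * proj1_sig s - 1)) = 2 * proj1_sig s - 1).
  { intros s h. apply clamp_val. pose proof (I01_bnd s). lra. }
  assert (IL : forall i (s : I01), (i < k1)%nat -> T i < proj1_sig s < T (S i) ->
     proj1_sig s <= 1/2 /\ t1 i < proj1_sig (clamp (2 * proj1_sig s)) < t1 (S i)).
  { intros i s hi. rewrite TL, TL by lia. intros [e1 e2].
    assert (proj1_sig s <= 1/2) by (pose proof (Tb (S i) ltac:(lia)); lra).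
    rewrite C1 by auto. split; [auto|lra]. }
  assert (IR : forall i (s : I01), (k1 <= i)%nat -> (i < k1 + k2)%nat -> T i < proj1_sig s < T (S i) ->
     1/2 < proj1_sig s /\ t2 (i - k1)%nat < proj1_sig (clamp (2 * proj1_sig s - 1)) < t2 (S (i - k1))).
  { intros i s hi hi2. rewrite TR, TR by lia. replace (S i - k1)%nat with (S (i - k1)) by lia. intros [e1 e2].
    assert (1/2 < proj1_sig s) by (pose proof (Tb' (i - k1)%nat ltac:(lia)); lra).
    rewrite C2 by auto. split; [auto|lra]. }
  exists (k1 + k2)%nat, T.
  split; [|split; [|split; [|split; [|split; [|split; [|split]]]]]].
  - rewrite TL by lia. rewrite H0; lra.
  - rewrite TR by lia. replace (k1 + k2 - k1)%nat with k2 by lia. rewrite Hk'; lra.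
  - intros i hi. destruct (Nat.lt_ge_cases i k1).
    + rewrite TL, TL by lia. pose proof (Hi i H); lra.
    + rewrite TR, TR by lia. replace (S i - k1)%nat with (S (i - k1)) by lia.
      pose proof (Hi' (i - k1)%nat ltac:(lia)); lra.
  - intros i s hi e. destruct (Nat.le_gt_cases i k1).
    + rewrite TL in e by lia. pose proof (Tb i H).
      rewrite concat_l by lra. apply (Hv i); auto. rewrite C1 by lra. lra.
    + rewrite TR in e by lia. pose proof (Tp' (i - k1)%nat ltac:(lia)). pose proof (Tb' (i - k1)%nat ltac:(lia)).
      rewrite concat_r by lra. apply (Hv' (i - k1)%nat); [lia|]. rewrite C2 by lra. lra.
  - intros i s hi e. destruct (Nat.lt_ge_cases i k1).
    + destruct (IL i s H e). rewrite concat_l by auto. apply (Hn i); auto.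
    + destruct (IR i s H hi e). rewrite concat_r by auto. apply (Hn' (i - k1)%nat); auto. lia.
  - intros i s s' hi e e' h. destruct (Nat.lt_ge_cases i k1).
    + destruct (IL i s H e), (IL i s' H e'). rewrite !concat_l by auto. apply (Hs i); auto.
      rewrite !C1 by auto. lra.
    + destruct (IR i s H hi e), (IR i s' H hi e'). rewrite !concat_r by auto. apply (Hs' (i - k1)%nat); auto.
      lia. rewrite !C2 by auto. lra.
  - intros i hi. destruct (Nat.lt_ge_cases i k1).
    + destruct (Hl i H) as [s [e1 e2]]. pose proof (I01_bnd s).
      assert (V : proj1_sig (clamp (proj1_sig s / 2)) = proj1_sig s / 2) by (apply clamp_val; lra).
      exists (clamp (proj1_sig s / 2)). rewrite TL, TL, V by lia. pose proof (Tb (S i) ltac:(lia)).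
      rewrite concat_l by lra. rewrite V. replace (2 * (proj1_sig s / 2)) with (proj1_sig s) by lra.
      rewrite (clamp_eq s) by auto. split; [lra|auto].
    + destruct (Hl' (i - k1)%nat ltac:(lia)) as [s [e1 e2]]. pose proof (I01_bnd s).
      assert (V : proj1_sig (clamp ((1 + proj1_sig s) / 2)) = (1 + proj1_sig s) / 2) by (apply clamp_val; lra).
      exists (clamp ((1 + proj1_sig s) / 2)). rewrite TR, TR, V by lia.
      replace (S i - k1)%nat with (S (i - k1)) by lia.
      pose proof (Tb' (i - k1)%nat ltac:(lia)).
      rewrite concat_r by lra. rewrite V. replace (2 * ((1 + proj1_sig s) / 2) - 1) with (proj1_sig s) by lra.
      rewrite (clamp_eq s) by auto. split; [lra|auto].
  - intros i hi. destruct (Nat.lt_ge_cases i k1).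
    + destruct (Hh i H) as [s [e1 e2]]. pose proof (I01_bnd s).
      assert (V : proj1_sig (clamp (proj1_sig s / 2)) = proj1_sig s / 2) by (apply clamp_val; lra).
      exists (clamp (proj1_sig s / 2)). rewrite TL, TL, V by lia. pose proof (Tb (S i) ltac:(lia)).
      rewrite concat_l by lra. rewrite V. replace (2 * (proj1_sig s / 2)) with (proj1_sig s) by lra.
      rewrite (clamp_eq s) by auto. split; [lra|auto].
    + destruct (Hh' (i - k1)%nat ltac:(lia)) as [s [e1 e2]]. pose proof (I01_bnd s).
      assert (V : proj1_sig (clamp ((1 + proj1_sig s) / 2)) = (1 + proj1_sig s) / 2) by (apply clamp_val; lra).
      exists (clamp ((1 + proj1_sig s) / 2)). rewrite TR, TR, V by lia.
      replace (S i - k1)%nat with (S (i - k1)) by lia.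
      pose proof (Tb' (i - k1)%nat ltac:(lia)).
      rewrite concat_r by lra. rewrite V. replace (2 * ((1 + proj1_sig s) / 2) - 1) with (proj1_sig s) by lra.
      rewrite (clamp_eq s) by auto. split; [lra|auto].
Qed.

Lemma QR_md : is_md QR.
Proof.
  split; [|split; [|split]].
  - split; [|split].
    + left; auto.
    + intros U V [HU|HU] [HV|HV]; [left; auto|right; intros x [_ h]; eapply HV; eauto
        |right; intros x [h _]; eapply HU; eauto|right; intros x [h _]; eapply HU; eauto].
    + intros F HF. destruct (classic (exists U, F U /\ forall x, U x)) as [[U [h1 h2]]|h].
      * left; intros x; exists U; auto.
      * right; intros x [U [h1 h2]]. destruct (HF U h1) as [h3|h3]; [apply h; eauto|eapply h3; eauto].
  - intros g Hg. split; [|split].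
    + intros U [HU|HU] x hx; simpl in *.
      * exists 1; split; [lra|intros; apply HU].
      * exfalso; eapply HU; eauto.
    + destruct Hg as (k & t & H0 & Hk & Hi & Hv & _). simpl. apply (Hv O); [lia|simpl; auto].
    + destruct Hg as (k & t & H0 & Hk & Hi & Hv & _). simpl. apply (Hv k); [lia|simpl; auto].
  - intros g phi Hg HG. apply PR_reparam; auto.
  - intros g1 g2 H1 H2 _. apply PR_concat; auto.
Qed.

Lemma cont_lower f g x eps : nondecr f -> strict g -> (forall t, g (f t) = t) -> (forall t, f (g t) = t) -> 0 < eps ->
  exists d, 0 < d /\ forall y : I01, proj1_sig x - d < proj1_sig y -> proj1_sig (f x) - eps < proj1_sig (f y).
Proof.
  intros Hf Sg H1 H2 He. set (y0 := proj1_sig (f x)). pose proof (I01_bnd (f x)).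
  destruct (Rlt_le_dec (y0 - eps/2) 0) as [h|h].
  - exists 1; split; [lra|]. intros y _. pose proof (I01_bnd (f y)). unfold y0 in *; lra.
  - set (c := clamp (y0 - eps/2)). assert (Vc : proj1_sig c = y0 - eps/2) by (apply clamp_val; unfold y0 in *; lra).
    assert (L : proj1_sig (g c) < proj1_sig x).
    { rewrite <- (H1 x). apply Sg. rewrite Vc. unfold y0; lra. }
    exists (proj1_sig x - proj1_sig (g c)); split; [lra|].
    intros y hy. pose proof (Hf (g c) y ltac:(lra)). rewrite H2, Vc in H0. unfold y0 in *; lra.
Qed.

Lemma cont_upper f g x eps : nondecr f -> strict g -> (forall t, g (f t) = t) -> (forall t, f (g t) = t) -> 0 < eps ->
  exists d, 0 < d /\ forall y : I01, proj1_sig y < proj1_sig x + d -> proj1_sig (f y) < proj1_sig (f x) + eps.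
Proof.
  intros Hf Sg H1 H2 He. set (y0 := proj1_sig (f x)). pose proof (I01_bnd (f x)).
  destruct (Rlt_le_dec 1 (y0 + eps/2)) as [h|h].
  - exists 1; split; [lra|]. intros y _. pose proof (I01_bnd (f y)). unfold y0 in *; lra.
  - set (c := clamp (y0 + eps/2)). assert (Vc : proj1_sig c = y0 + eps/2) by (apply clamp_val; unfold y0 in *; lra).
    assert (L : proj1_sig x < proj1_sig (g c)).
    { rewrite <- (H1 x). apply Sg. rewrite Vc. unfold y0; lra. }
    exists (proj1_sig (g c) - proj1_sig x); split; [lra|].
    intros y hy. pose proof (Hf y (g c) ltac:(lra)). rewrite H2, Vc in H0. unfold y0 in *; lra.
Qed.

Lemma mono_cont f g : nondecr f -> (forall t, g (f t) = t) -> (forall t, f (g t) = t) ->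
  continuous Ispace Ispace f.
Proof.
  intros Hf H1 H2. destruct (inv_props f g Hf H1 H2) as (_ & _ & Sg & _).
  intros U HU x Hx. simpl in *. destruct (HU (f x) Hx) as [eps [He Hb]].
  destruct (cont_lower f g x eps Hf Sg H1 H2 He) as [d1 [Hd1 L1]].
  destruct (cont_upper f g x eps Hf Sg H1 H2 He) as [d2 [Hd2 L2]].
  exists (Rmin d1 d2); split; [apply Rmin_pos; auto|].
  intros y hy. apply Hb.
  pose proof (Rmin_l d1 d2). pose proof (Rmin_r d1 d2).
  apply Rabs_def2 in hy. destruct hy.
  pose proof (L1 y ltac:(lra)). pose proof (L2 y ltac:(lra)).
  apply Rabs_def1; lra.
Qed.

Lemma open_prf (s : I01) : proj1_sig s <> 0 -> proj1_sig s <> 1 -> 0 < proj1_sig s < 1.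
Proof. intros h0 h1. pose proof (I01_bnd s). lra. Qed.

Definition cls {Z : Type} (z : Z) (s : I01) : gpt Z :=
  match Req_EM_T (proj1_sig s) 0 with
  | left _ => gbot
  | right h0 => match Req_EM_T (proj1_sig s) 1 with
                | left _ => gtop
                | right h1 => gin z (exist _ (proj1_sig s) (open_prf s h0 h1))
                end
  end.

Lemma cls_qrel {Z : Type} (z : Z) s : qrel (z, s) (cls z s).
Proof. unfold cls. destruct Req_dec_T; simpl; auto. destruct Req_dec_T; simpl; auto. Qed.

Lemma qrel_uniq {Z : Type} (p : Z * I01) g1 g2 : qrel p g1 -> qrel p g2 -> g1 = g2.
Proof.
  destruct p as [z s]. intros h1 h2.
  destruct g1 as [| |z1 s1], g2 as [| |z2 s2]; simpl in h1, h2; auto;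
  repeat match goal with H : _ /\ _ |- _ => destruct H end;
  try (pose proof (proj2_sig s1)); try (pose proof (proj2_sig s2)); simpl in *; try lra.
  subst. f_equal. destruct s1, s2; simpl in *; subst. f_equal. apply proof_irrelevance.
Qed.

Lemma qrel_cls {Z : Type} (z : Z) s g : qrel (z, s) g -> g = cls z s.
Proof. intros h. eapply qrel_uniq; eauto. apply cls_qrel. Qed.

Lemma PR_ext p q : (forall t, p t = q t) -> PR p -> PR q.
Proof. intros h. replace q with p; auto. apply functional_extensionality; auto. Qed.

Lemma is_mor_comp (A B C : MdSpace) f g : is_mor A B f -> is_mor B C g -> is_mor A C (fun x => g (f x)).
Proof.
  intros (c1 & s1 & p1) (c2 & s2 & p2). split; [|split].
  - intros U HU. apply (c1 (fun y => U (g y))). apply c2; auto.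
  - intros x hx; auto.
  - intros gam hg. apply (p2 (fun t => f (gam t))). apply p1; auto.
Qed.

Definition sphere {n} (z : Disk n) : Prop := sumsq n (proj1_sig z) = 1.

Definition cmap (n : nat) {Y : Type} (g : gpt (Sph n) -> Y) (hb : Y -> R) (y : gpt (Disk n)) : R :=
  match y with
  | gbot => 0
  | gtop => 0
  | gin z s => match Req_EM_T (sumsq n (proj1_sig z)) 1 with
               | left e => hb (g (gin (exist _ (proj1_sig z) (conj (proj1 (proj2_sig z)) e)) s))
               | right _ => proj1_sig s
               end
  end.

Section Cell.
Variables (n : nat) (Y : MdSpace) (g : Glob (SphSp n) -> Y) (hb : Y -> R).
Hypotheses (Hg : is_mor (Glob (SphSp n)) Y g) (Hh : is_mor Y QR hb).

Lemma hb_g_bot : hb (g gbot) = 0.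
Proof. destruct Hg as (_ & Hs & _), Hh as (_ & Hs' & _). apply Hs', Hs. simpl; auto. Qed.
Lemma hb_g_top : hb (g gtop) = 0.
Proof. destruct Hg as (_ & Hs & _), Hh as (_ & Hs' & _). apply Hs', Hs. simpl; auto. Qed.

Lemma cmap_compat y : cmap n g hb (glob_map (sph_incl n) y) = hb (g y).
Proof.
  destruct y as [| |z s]; simpl.
  - symmetry; apply hb_g_bot.
  - symmetry; apply hb_g_top.
  - destruct Req_dec_T as [e|e].
    + do 3 f_equal. destruct z as [x px]; simpl. f_equal; apply proof_irrelevance.
    + exfalso; apply e. exact (proj2 (proj2_sig z)).
Qed.

Lemma cmap_val (z : Disk n) s : ~ sphere z -> cmap n g hb (gin z s) = proj1_sig s.
Proof. intros h; simpl. destruct Req_dec_T; [contradiction|reflexivity]. Qed.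

Lemma qrel_ex {Z : Type} (p : Z * I01) : exists g0, qrel p g0.
Proof. destruct p as [z s]. exists (cls z s). apply cls_qrel. Qed.

Lemma cmap_mor : is_mor (Glob (DiskSp n)) QR (cmap n g hb).
Proof.
  split; [|split].
  - intros U [HU|HU]; simpl.
    + intros p _. exists (fun _ => True), (fun _ => True).
      split; [intros x _; exists 1; split; [lra|auto]|].
      split; [intros x _; exists 1; split; [lra|auto]|].
      split; [auto|split; [auto|]].
      intros a b _ _. destruct (qrel_ex (a, b)) as [g0 h0]. exists g0; split; auto.
    + intros p [g0 [_ h]]. exfalso; eapply HU; eauto.
  - intros x [-> | ->]; reflexivity.
  - intros gam (z & phi & HG & Hq). simpl.
    assert (Eg : forall t, gam t = cls z (phi t)) by (intros t; apply qrel_cls; auto).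
    destruct (Req_EM_T (sumsq n (proj1_sig z)) 1) as [e|e].
    + set (z' := exist (fun x => (forall i, (n <= i)%nat -> x i = 0) /\ sumsq n x = 1)
                   (proj1_sig z) (conj (proj1 (proj2_sig z)) e) : Sph n).
      assert (Pg : paths (Glob (SphSp n)) (fun t => cls z' (phi t))).
      { exists z', phi; split; auto. intros t; apply cls_qrel. }
      destruct Hg as (_ & _ & Hgp), Hh as (_ & _ & Hhp).
      pose proof (Hhp _ (Hgp _ Pg)) as HP. simpl in HP.
      apply (PR_ext (fun t => hb (g (cls z' (phi t))))); auto.
      intros t. rewrite Eg. unfold cls. destruct Req_dec_T.
      * simpl. apply hb_g_bot.
      * destruct Req_dec_T. simpl; apply hb_g_top.
        simpl. destruct Req_dec_T as [e'|e']; [|contradiction].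
        do 3 f_equal. unfold z'. f_equal. apply proof_irrelevance.
    + destruct (G11_props phi HG) as (psi & P1 & P2 & Sphi & Npsi & Spsi & F0 & F1 & Q0 & Q1).
      assert (V : forall s : I01, 0 < proj1_sig s < 1 -> cmap n g hb (gam s) = proj1_sig (phi s) /\
                0 < proj1_sig (phi s) < 1).
      { intros s hs. assert (0 < proj1_sig (phi s) < 1).
        { split. pose proof (Sphi I0 s ltac:(simpl; lra)); lra. pose proof (Sphi s I1 ltac:(simpl; lra)); lra. }
        split; auto. rewrite Eg. unfold cls. destruct Req_dec_T; [exfalso; lra|]. destruct Req_dec_T; [exfalso; lra|].
        simpl. destruct Req_dec_T; [contradiction|reflexivity]. }
      exists 1%nat, (fun i => match i with O => 0 | _ => 1 end).
      split; [reflexivity|split; [reflexivity|split; [|split; [|split; [|split; [|split]]]]]].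
      * intros i hi. assert (i = O) by lia. subst. lra.
      * intros i s hi hs. rewrite Eg. unfold cls.
        destruct i; [|destruct i; [|lia]]; cbn in hs.
        -- rewrite (I01_eq s I0 hs). destruct Req_dec_T; [reflexivity|exfalso; lra].
        -- rewrite (I01_eq s I1 hs). destruct Req_dec_T; [exfalso; lra|]. destruct Req_dec_T; [reflexivity|exfalso; lra].
      * intros i s hi hs. assert (i = O) by lia. subst. destruct (V s hs) as [-> ?]; auto.
      * intros i s s' hi hs hs' h. assert (i = O) by lia. subst.
        destruct (V s hs) as [-> ?]. destruct (V s' hs') as [-> ?]. apply Sphi; auto.
      * intros i hi. assert (i = O) by lia. subst.
        assert (Vc : proj1_sig (clamp (1/4)) = 1/4) by (apply clamp_val; lra).
        assert (0 < proj1_sig (psi (clamp (1/4))) < 1).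
        { split. pose proof (Spsi I0 (clamp (1/4)) ltac:(rewrite Vc; simpl; lra)); lra. pose proof (Spsi (clamp (1/4)) I1 ltac:(rewrite Vc; simpl; lra)); lra. }
        exists (psi (clamp (1/4))). split; auto. destruct (V _ H) as [-> _]. rewrite P2, Vc. lra.
      * intros i hi. assert (i = O) by lia. subst.
        assert (Vc : proj1_sig (clamp (3/4)) = 3/4) by (apply clamp_val; lra).
        assert (0 < proj1_sig (psi (clamp (3/4))) < 1).
        { split. pose proof (Spsi I0 (clamp (3/4)) ltac:(rewrite Vc; simpl; lra)); lra. pose proof (Spsi (clamp (3/4)) I1 ltac:(rewrite Vc; simpl; lra)); lra. }
        exists (psi (clamp (3/4))). split; auto. destruct (V _ H) as [-> _]. rewrite P2, Vc. lra.
Qed.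
End Cell.

Section Tower.
Variables (O : Type) (lt : O -> O -> Prop) (X : O -> MdSpace) (m : forall a b, X a -> X b).
Hypothesis HT : is_cell_tower lt X m.

Lemma T_trans a b c : lt a b -> lt b c -> lt a c.
Proof. destruct HT as [[h _] _]; eauto. Qed.
Lemma T_irr a : ~ lt a a.
Proof. destruct HT as [[_ [h _]] _]; eauto. Qed.
Lemma T_tri a b : lt a b \/ a = b \/ lt b a.
Proof. destruct HT as [[_ [_ [h _]]] _]; eauto. Qed.
Lemma T_wf : well_founded lt.
Proof. destruct HT as [[_ [_ [_ h]]] _]; eauto. Qed.
Lemma T_md a : is_md (X a).
Proof. destruct HT as (_ & h & _); eauto. Qed.
Lemma T_mor a b : leo lt a b -> is_mor (X a) (X b) (m a b).
Proof. destruct HT as (_ & _ & h & _); eauto. Qed.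
Lemma T_id a x : m a a x = x.
Proof. destruct HT as (_ & _ & _ & h & _); eauto. Qed.
Lemma T_comp a b c : leo lt a b -> leo lt b c -> forall x, m b c (m a b x) = m a c x.
Proof. destruct HT as (_ & _ & _ & _ & h & _); eauto. Qed.
Lemma T_base a : (forall b, ~ lt b a) -> discrete_md (X a).
Proof. destruct HT as (_ & _ & _ & _ & _ & h & _); eauto. Qed.
Lemma T_lim a : (exists b, lt b a) -> (forall b, lt b a -> exists c, lt b c /\ lt c a) ->
     is_colim lt X m (fun b => lt b a) (X a) (fun b => m b a).
Proof. destruct HT as (_ & _ & _ & _ & _ & _ & _ & h); eauto. Qed.

Lemma leo_trans a b c : leo lt a b -> leo lt b c -> leo lt a c.
Proof.
  intros [h1| ->] [h2| ->]; unfold leo; auto. left; eapply T_trans; eauto.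
Qed.
Lemma leo_refl a : leo lt a a.
Proof. right; auto. Qed.

Definition succ a a' := lt a a' /\ forall c, ~ (lt a c /\ lt c a').

Record sdata (a a' : O) := {
  sn : nat; sg : Glob (SphSp sn) -> X a; sk : Glob (DiskSp sn) -> X a';
  sprop : is_mor (Glob (SphSp sn)) (X a) sg /\
          @is_pushout (Glob (SphSp sn)) (Glob (DiskSp sn)) (X a) (X a')
            (glob_map (sph_incl sn)) sg sk (m a a') }.

Lemma sdata_ex a a' : succ a a' -> exists d : sdata a a', True.
Proof.
  intros [h1 h2]. destruct HT as (_ & _ & _ & _ & _ & _ & h & _).
  destruct (h a a' h1 h2) as (n & g & k & H1 & H2).
  exists (Build_sdata a a' n g k (conj H1 H2)); auto.
Qed.

Definition D a a' (H : succ a a') : sdata a a' :=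
  proj1_sig (constructive_indefinite_description _ (sdata_ex a a' H)).

Definition Canon a (h : X a -> R) : Prop :=
  is_mor (X a) QR h /\
  (forall b, leo lt b a -> (forall c, ~ lt c b) -> forall x, h (m b a x) = 0) /\
  (forall b b' (H : succ b b'), leo lt b' a -> forall (z : Disk (sn _ _ (D b b' H))) (s : O01),
      ~ sphere z -> h (m b' a (sk _ _ (D b b' H) (gin z s))) = proj1_sig s).

Lemma succ_uniq b b' a : succ b a -> succ b' a -> b = b'.
Proof.
  intros [h1 h2] [h1' h2']. destruct (T_tri b b') as [h|[h|h]]; auto.
  - exfalso; apply (h2 b'); auto.
  - exfalso; apply (h2' b); auto.
Qed.

Lemma below_succ b a c : succ b a -> lt c a -> leo lt c b.
Proof.
  intros [h1 h2] h. destruct (T_tri c b) as [e|[e|e]]; [left; auto|right; auto|].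
  exfalso; apply (h2 c); auto.
Qed.

Lemma canon_uniq a h h' : Canon a h -> Canon a h' ->
  forall b, leo lt b a -> forall x, h (m b a x) = h' (m b a x).
Proof.
  intros (Hm & Hb & Hs) (Hm' & Hb' & Hs').
  intros b; induction b as [b IH] using (well_founded_ind T_wf). intros Hba x.
  destruct (classic (exists c, lt c b)) as [[c0 Hc0]|Hmin].
  2: { assert (forall c, ~ lt c b) by (intros c hc; apply Hmin; eauto).
       rewrite Hb, Hb'; auto. }
  destruct (classic (exists c, succ c b)) as [[c Hc]|Hns].
  - set (d := D c b Hc).
    destruct (sprop _ _ d) as [Hgm [Hkm [Hmm [Hcomm Huniv]]]].
    assert (Hca : leo lt c a) by (apply leo_trans with b; auto; left; apply Hc).
    assert (Mba : is_mor (X b) QR (fun y => h (m b a y))) by (eapply is_mor_comp; [apply T_mor; auto|auto]).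
    assert (Mba' : is_mor (X b) QR (fun y => h' (m b a y))) by (eapply is_mor_comp; [apply T_mor; auto|auto]).
    assert (Mca : is_mor (X c) QR (fun y => h (m c a y))) by (eapply is_mor_comp; [apply T_mor; auto|auto]).
    assert (Mk : is_mor (Glob (DiskSp (sn _ _ d))) QR (fun y => h (m b a (sk _ _ d y))))
      by (apply (is_mor_comp (Glob (DiskSp (sn _ _ d))) (X b) QR (sk _ _ d) (fun y => h (m b a y)) Hkm Mba)).
    assert (CMP : forall y, h (m b a (m c b y)) = h (m c a y)) by (intros; rewrite T_comp; auto; left; apply Hc).
    assert (CMP' : forall y, h' (m b a (m c b y)) = h' (m c a y)) by (intros; rewrite T_comp; auto; left; apply Hc).
    assert (IHc : forall y, h' (m c a y) = h (m c a y)) by (intros; symmetry; apply IH; auto; apply Hc).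
    destruct (Huniv QR QR_md (fun y => h (m b a (sk _ _ d y))) (fun y => h (m c a y)) Mk Mca) as [_ U].
    { intros y. rewrite Hcomm. apply CMP. }
    symmetry. apply (U (fun y => h' (m b a y)) (fun y => h (m b a y)) Mba' Mba).
    + assert (KG : forall y, h' (m b a (sk _ _ d (glob_map (sph_incl (sn _ _ d)) y))) =
                             h (m b a (sk _ _ d (glob_map (sph_incl (sn _ _ d)) y)))).
      { intros y. rewrite Hcomm, CMP, CMP'; auto. }
      intros y. destruct y as [| |z s].
      * exact (KG gbot).
      * exact (KG gtop).
      * destruct (classic (sphere z)) as [e|e].
        -- set (z' := exist (fun x => (forall i, (sn _ _ d <= i)%nat -> x i = 0) /\ sumsq (sn _ _ d) x = 1)
                   (proj1_sig z) (conj (proj1 (proj2_sig z)) e) : Sph (sn _ _ d)).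
           assert (Ez : sph_incl _ z' = z).
           { destruct z as [zx zp]. unfold sph_incl; simpl. f_equal. apply proof_irrelevance. }
           rewrite <- Ez. exact (KG (gin z' s)).
        -- unfold d. rewrite Hs, Hs'; auto.
    + intros y; simpl. rewrite CMP', IHc. reflexivity.
    + intros y; reflexivity.
    + intros y; simpl. apply CMP.
  - assert (Hlim : forall c, lt c b -> exists e, lt c e /\ lt e b).
    { intros c hc. apply NNPP. intros hn. apply Hns. exists c. split; auto.
      intros e [h1 h2]. apply hn; eauto. }
    destruct (T_lim b (ex_intro _ c0 Hc0) Hlim) as (_ & _ & Hcu).
    assert (Mb : forall c, leo lt c a -> is_mor (X c) QR (fun y => h (m c a y)))
      by (intros; eapply is_mor_comp; [apply T_mor; auto|auto]).
    assert (Mb' : forall c, leo lt c a -> is_mor (X c) QR (fun y => h' (m c a y)))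
      by (intros; eapply is_mor_comp; [apply T_mor; auto|auto]).
    destruct (Hcu QR QR_md (fun c y => h (m c a y))) as [_ U].
    { intros c hc. apply Mb. apply leo_trans with b; auto. left; auto. }
    { intros c1 c2 h1 h2 h12 y. rewrite T_comp; auto. apply leo_trans with b; auto. left; auto. }
    apply (U (fun y => h (m b a y)) (fun y => h' (m b a y))).
    + apply Mb; auto.
    + apply Mb'; auto.
    + intros c hc y. rewrite T_comp; auto. left; auto.
    + intros c hc y. rewrite T_comp; auto. symmetry; apply IH; auto. apply leo_trans with b; auto. left; auto.
      left; auto.
Qed.

Lemma canon_restr a h b : Canon a h -> leo lt b a -> Canon b (fun x => h (m b a x)).
Proof.
  intros (Hm & Hb & Hs) hba. split; [|split].
  - eapply is_mor_comp; [apply T_mor; auto|auto].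
  - intros b0 h0 hmin x. rewrite T_comp; auto. apply Hb; auto. eapply leo_trans; eauto.
  - intros b1 b1' H h1 z s hz. rewrite T_comp; auto. apply Hs; auto. eapply leo_trans; eauto.
Qed.

Lemma canon_zero a : (forall b, ~ lt b a) -> Canon a (fun _ => 0).
Proof.
  intros hmin. destruct (T_base a hmin) as (Hs & Ho & Hp). split; [|split].
  - split; [|split].
    + intros U _. apply Ho.
    + intros x _; simpl; reflexivity.
    + intros g hg. exfalso; eapply Hp; eauto.
  - intros; reflexivity.
  - intros b b' H h2. pose proof (proj1 H) as h1. exfalso. destruct h2 as [h2|h2].
    + eapply hmin, T_trans; eauto.
    + subst. eapply hmin; eauto.
Qed.

Lemma canon_ex : forall a, exists h, Canon a h.
Proof.
  intros a; induction a as [a IH] using (well_founded_ind T_wf).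
  destruct (classic (exists c, lt c a)) as [[c0 Hc0]|Hmin].
  2: { exists (fun _ => 0). apply canon_zero. intros c hc; apply Hmin; eauto. }
  destruct (classic (exists c, succ c a)) as [[b Hba]|Hns].
  - destruct (IH b (proj1 Hba)) as [hb Hcb].
    set (d := D b a Hba).
    destruct (sprop _ _ d) as [Hgm [Hkm [Hmm [Hcomm Huniv]]]].
    destruct Hcb as (Hm & Hb & Hs).
    destruct (Huniv QR QR_md (cmap (sn _ _ d) (sg _ _ d) hb) hb
                (cmap_mor _ _ _ _ Hgm Hm) Hm) as [[u (Hu & Hu1 & Hu2)] _].
    { intros y. apply cmap_compat; auto. }
    exists u. split; [auto|split].
    + intros b0 h0 hmin x. destruct h0 as [h0| ->].
      2: { exfalso; apply (hmin b); apply Hba. }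
      pose proof (below_succ b a b0 Hba h0) as hb0.
      rewrite <- (T_comp b0 b a hb0 (or_introl (proj1 Hba))). simpl in Hu2. rewrite Hu2. apply Hb; auto.
    + intros b1 b1' H h1 z s hz. destruct h1 as [h1| ->].
      * pose proof (below_succ b a b1' Hba h1) as hb1.
        rewrite <- (T_comp b1' b a hb1 (or_introl (proj1 Hba))). simpl in Hu2. rewrite Hu2. apply Hs; auto.
      * pose proof (succ_uniq _ _ _ H Hba) as E. subst b1.
        assert (E : H = Hba) by apply proof_irrelevance. subst H.
        rewrite T_id. fold d in z |- *. simpl in Hu1. rewrite Hu1. apply cmap_val; auto.
  - assert (Hlim : forall c, lt c a -> exists e, lt c e /\ lt e a).
    { intros c hc. apply NNPP. intros hn. apply Hns. exists c. split; auto.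
      intros e [h1 h2]. apply hn; eauto. }
    assert (E : forall c, exists h, lt c a -> Canon c h).
    { intros c. destruct (classic (lt c a)) as [hc|hc].
      - destruct (IH c hc) as [h Hh]; eauto.
      - exists (fun _ => 0); intros; contradiction. }
    set (q c := proj1_sig (constructive_indefinite_description _ (E c))).
    assert (Hq : forall c, lt c a -> Canon c (q c))
      by (intros c; exact (proj2_sig (constructive_indefinite_description _ (E c)))).
    assert (Coh : forall c1 c2, lt c1 a -> lt c2 a -> leo lt c1 c2 -> forall x, q c2 (m c1 c2 x) = q c1 x).
    { intros c1 c2 h1 h2 h12 x.
      pose proof (canon_uniq c1 _ _ (canon_restr c2 (q c2) c1 (Hq c2 h2) h12) (Hq c1 h1) c1 (leo_refl _) x).
      rewrite !T_id in H. exact H. }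
    destruct (T_lim a (ex_intro _ c0 Hc0) Hlim) as (_ & _ & Hcu).
    destruct (Hcu QR QR_md q) as [[u [Hu Hu1]] _].
    { intros c hc. apply Hq; auto. }
    { exact Coh. }
    exists u. split; [auto|split].
    + intros b0 h0 hmin x. destruct h0 as [h0| ->].
      2: { exfalso; eapply hmin; eauto. }
      rewrite Hu1 by auto. destruct (Hq b0 h0) as (_ & Hb & _).
      rewrite <- (T_id b0 x). apply Hb; auto. apply leo_refl.
    + intros b1 b1' H h1 z s hz. destruct h1 as [h1| ->].
      * rewrite Hu1 by auto. destruct (Hq b1' h1) as (_ & _ & Hs).
        rewrite <- (T_id b1' (sk _ _ _ _)). apply Hs; auto. apply leo_refl.
      * exfalso. destruct H as [h1 h2]. destruct (Hlim b1 h1) as [e [he1 he2]]. eapply h2; eauto.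
Qed.

Lemma sigma_ex (Y : MdSpace) (l : forall a, X a -> Y) :
  is_colim lt X m (fun _ => True) Y l -> exists u, is_mor Y QR u.
Proof.
  intros (_ & _ & Hcu).
  set (q c := proj1_sig (constructive_indefinite_description _ (canon_ex c))).
  assert (Hq : forall c, Canon c (q c))
    by (intros c; exact (proj2_sig (constructive_indefinite_description _ (canon_ex c)))).
  destruct (Hcu QR QR_md q) as [[u [Hu _]] _].
  { intros c _. apply Hq. }
  { intros c1 c2 _ _ h12 x.
    pose proof (canon_uniq c1 _ _ (canon_restr c2 (q c2) c1 (Hq c2) h12) (Hq c1) c1 (leo_refl _) x).
    rewrite !T_id in H. exact H. }
  eauto.
Qed.
End Tower.

Theorem theorem6p6 (X : MdSpace) (HX : cellular X)
  (g1 g2 : I01 -> X) (Hg1 : paths X g1) (Hg2 : paths X g2)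
  (phi1 phi2 : I01 -> I01)
  (Hnd1 : nondecr phi1) (Hnd2 : nondecr phi2)
  (H10 : phi1 I0 = I0) (H11 : phi1 I1 = I1)
  (H20 : phi2 I0 = I0) (H21 : phi2 I1 = I1)
  (Hc1 : forall t, g1 (phi1 t) = g2 t)
  (Hc2 : forall t, g1 t = g2 (phi2 t)) :
  in_G11 phi1 /\ in_G11 phi2 /\
  (forall t, phi1 (phi2 t) = t) /\ (forall t, phi2 (phi1 t) = t).
Proof.
  destruct HX as [HXmd (O & lt & Xs & m & l & HT & HC)].
  destruct (sigma_ex O lt Xs m HT X l HC) as [u Hu].
  destruct Hu as (_ & _ & Hup).
  pose proof (Hup g1 Hg1) as P1. pose proof (Hup g2 Hg2) as P2. simpl in P1, P2.
  assert (E1 : forall t, phi1 (phi2 t) = t).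
  { apply (PR_rigid (fun t => u (g1 t))); auto.
    - intros s t h. apply Hnd1, Hnd2, h.
    - intros s. rewrite Hc1, <- Hc2. reflexivity. }
  assert (E2 : forall t, phi2 (phi1 t) = t).
  { apply (PR_rigid (fun t => u (g2 t))); auto.
    - intros s t h. apply Hnd2, Hnd1, h.
    - intros s. rewrite <- Hc2, Hc1. reflexivity. }
  split; [|split; [|split; auto]].
  - split; [auto|split; [apply (mono_cont phi1 phi2); auto|]].
    exists phi2. split; [apply (mono_cont phi2 phi1); auto|split; auto].
  - split; [auto|split; [apply (mono_cont phi2 phi1); auto|]].
    exists phi1. split; [apply (mono_cont phi1 phi2); auto|split; auto].
Qed.
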